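(* Let $\mathcal{H}$ be a finite-dimensional Hilbert space, $U$ a unitary on $\mathcal{H}$ and $\Pi,\widetilde\Pi$ orthogonal projectors on $\mathcal{H}$. Let $n\ge1$, $\Phi=(\phi_1,\ldots,\phi_n)\in\mathbb{R}^n$, and let $P\in\mathbb{C}[x]$ be a polynomial of degree at most $n$ such that for all $x\in[-1,1]$ the top-left entry of $\prod_{j=1}^n\left(e^{i\phi_j\sigma_z}R(x)\right)$ equals $P(x)$ (such a $P$ exists and has parity $(n\bmod 2)$). Then $$P^{(SV)}(\widetilde\Pi U\Pi)=\begin{cases}\widetilde\Pi U_\Phi\Pi & \text{if } n \text{ is odd},\\ \Pi U_\Phi\Pi & \text{if } n\text{ is even}.\end{cases}$$
   Context: $\sigma_z=\mathrm{diag}(1,-1)$; $R(x)=\begin{pmatrix} x & \sqrt{1-x^2}\\ \sqrt{1-x^2} & -x\end{pmatrix}$; $\prod_{j=1}^n M_j=M_1\cdots M_n$. Alternating phase modulation sequence: for $n$ odd, $U_\Phi:=e^{i\phi_1(2\widetilde\Pi-I)}U\prod_{j=1}^{(n-1)/2}\left(e^{i\phi_{2j}(2\Pi-I)}U^\dagger e^{i\phi_{2j+1}(2\widetilde\Pi-I)}U\right)$; for $n$ even, $U_\Phi:=\prod_{j=1}^{n/2}\left(e^{i\phi_{2j-1}(2\Pi-I)}U^\dagger e^{i\phi_{2j}(2\widetilde\Pi-I)}U\right)$. Singular value transformation: let $A=\widetilde\Pi U\Pi$, $d=\mathrm{rank}\,\Pi$, $\tilde d=\mathrm{rank}\,\widetilde\Pi$,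 $d_{\min}=\min(d,\tilde d)$, and write $A=\sum_{i=1}^{d_{\min}}\varsigma_i|\tilde\psi_i\rangle\langle\psi_i|$ with $\varsigma_i\ge0$, $(|\psi_i\rangle)_{i\in[d]}$ an orthonormal basis of $\mathrm{img}\,\Pi$ and $(|\tilde\psi_i\rangle)_{i\in[\tilde d]}$ an orthonormal basis of $\mathrm{img}\,\widetilde\Pi$; set $\varsigma_i:=0$ for $d_{\min}<i\le d$. For an odd function $f$, $f^{(SV)}(A):=\sum_{i=1}^{d_{\min}}f(\varsigma_i)|\tilde\psi_i\rangle\langle\psi_i|$; for an even $f$, $f^{(SV)}(A):=\sum_{i=1}^{d}f(\varsigma_i)|\psi_i\rangle\langle\psi_i|$. *)

(* Defs.v *)
(* Complex numbers = an arbitrary numClosedFieldType C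
   (e.g. the complex numbers); the finite-dimensional Hilbert space is C^N
   (column vectors 'cV[C]_N) with the standard inner product, operators are
   'M[C]_N, and the adjoint is  M ^t*  (conjugate transpose, spectral.v). *)
From HB Require Import structures.
From mathcomp Require Import all_boot all_order all_algebra.
Set Implicit Arguments. Unset Strict Implicit. Unset Printing Implicit Defensive.
Import Order.TTheory GRing.Theory Num.Theory.
Local Open Scope ring_scope.
Local Open Scope sesquilinear_scope.

Section Defs.
Variable C : numClosedFieldType.

Definition orth_proj N (Q : 'M[C]_N) : Prop := Q *m Q = Q /\ Q ^t* = Q.

(* exp(i phi (2Q - I)) where w = e^{i phi} (|w| = 1) and Q is an orthogonal
   projector: 2Q - I has eigenvalue +1 on img Q and -1 on ker Q, hence
   exp(i phi (2Q - I)) = e^{i phi} Q + e^{-i phi} (I - Q). *)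
Definition phase_refl N (w : C) (Q : 'M[C]_N) : 'M[C]_N :=
  w *: Q + w^* *: (1%:M - Q).

(* exp(i phi sigma_z) = diag(e^{i phi}, e^{-i phi}) with w = e^{i phi}. *)
Definition exp_sz (w : C) : 'M[C]_2 :=
  \matrix_(i < 2, j < 2)
    (if i == j then (if i == 0 :> 'I_2 then w else w^*) else 0).

Definition Rmx (x : C) : 'M[C]_2 :=
  \matrix_(i < 2, j < 2)
    (if i == j then (if i == 0 :> 'I_2 then x else - x)
     else sqrtC (1 - x ^+ 2)).

Definition qsp_mx (n : nat) (w : nat -> C) (x : C) : 'M[C]_2 :=
  \big[mulmx/1%:M]_(1 <= j < n.+1) (exp_sz (w j) *m Rmx x).

Definition UPhi N (n : nat) (w : nat -> C) (U Pi Pit : 'M[C]_N) : 'M[C]_N :=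
  if odd n then
    phase_refl (w 1%N) Pit *m U *m
    \big[mulmx/1%:M]_(1 <= j < (n.-1)./2.+1)
      (phase_refl (w (2 * j)%N) Pi *m U ^t* *m
       phase_refl (w (2 * j).+1) Pit *m U)
  else
    \big[mulmx/1%:M]_(1 <= j < n./2.+1)
      (phase_refl (w (2 * j).-1) Pi *m U ^t* *m
       phase_refl (w (2 * j)%N) Pit *m U).

(* (psi_i)_{i<d} is an orthonormal basis of img Q (column space of Q). *)
Definition onb_of N d (Q : 'M[C]_N) (psi : 'I_d -> 'cV[C]_N) : Prop :=
  (forall i j : 'I_d, (psi i) ^t* *m psi j = (i == j)%:R%:M) /\
  (\matrix_(i < d) (psi i)^T == Q^T)%MS.

Definition is_svd N (A Pi Pit : 'M[C]_N)
    (psi : 'I_(\rank Pi) -> 'cV[C]_N) (psit : 'I_(\rank Pit) -> 'cV[C]_N)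
    (s : 'I_(\rank Pi) -> C) : Prop :=
  onb_of Pi psi /\ onb_of Pit psit /\
  (forall i, 0 <= s i) /\
  (forall i : 'I_(\rank Pi), (minn (\rank Pi) (\rank Pit) <= i)%N -> s i = 0) /\
  A = \sum_(i < minn (\rank Pi) (\rank Pit))
        s (widen_ord (geq_minl _ _) i) *:
          (psit (widen_ord (geq_minr _ _) i) *m (psi (widen_ord (geq_minl _ _) i)) ^t*).

Definition svt_odd N (Pi Pit : 'M[C]_N) (f : C -> C)
    (psi : 'I_(\rank Pi) -> 'cV[C]_N) (psit : 'I_(\rank Pit) -> 'cV[C]_N)
    (s : 'I_(\rank Pi) -> C) : 'M[C]_N :=
  \sum_(i < minn (\rank Pi) (\rank Pit))
     f (s (widen_ord (geq_minl _ _) i)) *: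
       (psit (widen_ord (geq_minr _ _) i) *m (psi (widen_ord (geq_minl _ _) i)) ^t*).

Definition svt_even N (Pi : 'M[C]_N) (f : C -> C)
    (psi : 'I_(\rank Pi) -> 'cV[C]_N) (s : 'I_(\rank Pi) -> C) : 'M[C]_N :=
  \sum_(i < \rank Pi) f (s i) *: (psi i *m (psi i) ^t*).

End Defs.

Arguments svt_odd {C N} Pi Pit f psi psit s.
Arguments svt_even {C N} Pi f psi s.
Arguments is_svd {C N} A Pi Pit psi psit s.
Arguments onb_of {C N d} Q psi.

(* Main.v *)
Require Import Defs.
From HB Require Import structures.
From mathcomp Require Import all_boot all_order all_algebra.
From mathcomp Require Import ring.
Import Order.TTheory GRing.Theory Num.Theory.
Local Open Scope ring_scope.
Local Open Scope sesquilinear_scope.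

Section S.
Variable C : numClosedFieldType.

Fixpoint ag (k : nat) (v : nat -> C) : {poly C} * {poly C} :=
  if k is k'.+1 then
    let p := ag k' (fun j => v j.+1) in
    if odd k' then (v 1%N *: ('X * p.1 + (1 - 'X) * p.2), (v 1%N)^* *: (p.1 - p.2))
    else (v 1%N *: (p.1 + (1 - 'X) * p.2), (v 1%N)^* *: (p.1 - 'X * p.2))
  else (1, 0).

Lemma qsp_rec k v (x : C) :
  qsp_mx k.+1 v x = (exp_sz (v 1%N) *m Rmx x) *m qsp_mx k (fun j => v j.+1) x.
Proof. by rewrite /qsp_mx big_nat_recl. Qed.

Lemma agS k v : ag k.+1 v =
    if odd k then (v 1%N *: ('X * (ag k (fun j => v j.+1)).1 + (1 - 'X) * (ag k (fun j => v j.+1)).2), (v 1%N)^* *: ((ag k (fun j => v j.+1)).1 - (ag k (fun j => v j.+1)).2))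
    else (v 1%N *: ((ag k (fun j => v j.+1)).1 + (1 - 'X) * (ag k (fun j => v j.+1)).2), (v 1%N)^* *: ((ag k (fun j => v j.+1)).1 - 'X * (ag k (fun j => v j.+1)).2)).
Proof. by []. Qed.
Lemma ifTE (T : Type) (a b : T) : (if true then a else b) = a. Proof. by []. Qed.
Lemma ifFE (T : Type) (a b : T) : (if false then a else b) = b. Proof. by []. Qed.
Lemma fstE (T U : Type) (a : T) (b : U) : (a, b).1 = a. Proof. by []. Qed.
Lemma sndE (T U : Type) (a : T) (b : U) : (a, b).2 = b. Proof. by []. Qed.

Definition i1 : 'I_2 := @Ordinal 2 1 isT.

Lemma mul2E (A B : 'M[C]_2) i j :
  (A *m B) i j = A i ord0 * B ord0 j + A i i1 * B i1 j.
Proof.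
rewrite mxE !big_ord_recl big_ord0 addr0.
by have -> : lift ord0 ord0 = i1 by apply/val_inj.
Qed.


Lemma Fent (w x : C) : let F := exp_sz w *m Rmx x in
  [/\ F ord0 ord0 = w * x, F ord0 i1 = w * sqrtC (1 - x ^+ 2),
      F i1 ord0 = w^* * sqrtC (1 - x ^+ 2) & F i1 i1 = - (w^* * x)].
Proof. by rewrite /= !mul2E !mxE /=; split; ring. Qed.

Lemma qsp_col k v (x : C) :
  qsp_mx k v x ord0 ord0 = (if odd k then x else 1) * (ag k v).1.[x ^+ 2] /\
  qsp_mx k v x i1 ord0 = (if odd k then 1 else x) * sqrtC (1 - x ^+ 2) * (ag k v).2.[x ^+ 2].
Proof.
elim: k v => [|k IH] v.
  by rewrite /qsp_mx big_geq // !mxE /= !hornerE; split.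
have [h0 h1] := IH (fun j => v j.+1).
have [f00 f01 f10 f11] := Fent (v 1%N) x.
have hy := sqrtCK (1 - x ^+ 2).
set y := sqrtC (1 - x ^+ 2) in h1 hy f01 f10 *.
set a := (ag k (fun j => v j.+1)).1.[x ^+ 2] in h0.
set c := (ag k (fun j => v j.+1)).2.[x ^+ 2] in h1.
rewrite qsp_rec.
set F := exp_sz _ *m _ in f00 f01 f10 f11 *.
rewrite (mul2E F) (mul2E F) f00 f01 f10 f11 h0 h1 agS oddS.
case: (odd k); rewrite ?ifTE ?ifFE /negb ?ifTE ?ifFE ?fstE ?sndE !(hornerZ,hornerD,hornerN,hornerM,hornerX,hornerC) -/a -/c; split; try rewrite -hy; ring.


Qed.
Variable N : nat.
Implicit Types U Pi Pit : 'M[C]_N.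

Definition Gf U Pi Pit (a b : C) := phase_refl a Pi *m U ^t* *m phase_refl b Pit *m U.

Lemma UPhiS k v U Pi Pit :
  UPhi k.+1 v U Pi Pit =
  (if odd k then phase_refl (v 1%N) Pi *m U ^t* else phase_refl (v 1%N) Pit *m U)
    *m UPhi k (fun j => v j.+1) U Pi Pit.
Proof.
rewrite /UPhi oddS.
case hk: (odd k) => /=.
- case: k hk => [|k] //= hk.
  rewrite big_nat_recl // !mulmxA; congr (_ *m _).
  apply: eq_big_nat => j /andP [hj _].
  have -> : (2 * j.+1).-1 = (2 * j).+1 by rewrite mulnS.
  by have -> : (2 * j.+1)%N = (2 * j).+2 by rewrite mulnS.
- congr (_ *m _).
  apply: eq_big_nat => j /andP [hj _].
  by case: j hj.
Qed.

Lemma mul_cmb m p (M : 'M[C]_(m, N)) (x y : 'M[C]_(N, p)) a b :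
  M *m (a *: x + b *: y) = a *: (M *m x) + b *: (M *m y).
Proof. by rewrite mulmxDr -!scalemxAr. Qed.

Lemma cmbE m p (x y : 'M[C]_(m, p)) a b p1 q1 p2 q2 :
  a *: (p1 *: x + q1 *: y) + b *: (p2 *: x + q2 *: y) =
  (a * p1 + b * p2) *: x + (a * q1 + b * q2) *: y.
Proof.
rewrite !scalerDr !scalerA !scalerDl.
by rewrite -!addrA; congr (_ + _); rewrite addrCA.
Qed.

Lemma phaseE (w : C) (Q : 'M[C]_N) (z : 'cV[C]_N) :
  phase_refl w Q *m z = w *: (Q *m z) + w^* *: (z - Q *m z).
Proof. by rewrite /phase_refl mulmxDl -!scalemxAl mulmxBl mul1mx. Qed.

Section Vec.
Variables (U Pi Pit : 'M[C]_N).
Hypothesis hUU : U *m U ^t* = 1%:M.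
Hypothesis hUU' : U ^t* *m U = 1%:M.
Hypothesis hPi : Pi *m Pi = Pi.
Hypothesis hPit : Pit *m Pit = Pit.
Variables (psi : 'cV[C]_N) (t : C).
Hypothesis hpsi : Pi *m psi = psi.
Let f0 := Pit *m (U *m psi).
Let f1 := U *m psi - f0.
Let D := U ^t* *m f0 - t *: psi.
Hypothesis ht : Pi *m (U ^t* *m f0) = t *: psi.

Lemma vUpsi : U *m psi = 1 *: f0 + 1 *: f1.
Proof. by rewrite !scale1r /f1 addrC subrK. Qed.
Lemma vUD : U *m D = (1 - t) *: f0 + (- t) *: f1.
Proof.
rewrite /D mulmxBr mulmxA hUU mul1mx -scalemxAr vUpsi !scale1r.
by rewrite scalerDr scalerBl scale1r scaleNr opprD addrA.
Qed.
Lemma vU'f0 : U ^t* *m f0 = t *: psi + 1 *: D.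
Proof. by rewrite scale1r /D addrC subrK. Qed.
Lemma vU'f1 : U ^t* *m f1 = (1 - t) *: psi + (-1) *: D.
Proof.
rewrite /f1 mulmxBr mulmxA hUU' mul1mx vU'f0 scale1r scaleN1r scalerBl scale1r.
by rewrite opprD addrA.
Qed.
Lemma vPitf0 : Pit *m f0 = f0.
Proof. by rewrite /f0 mulmxA hPit. Qed.
Lemma vPitf1 : Pit *m f1 = 0.
Proof. by rewrite /f1 mulmxBr vPitf0 /f0 subrr. Qed.
Lemma vPiD : Pi *m D = 0.
Proof. by rewrite /D mulmxBr ht -scalemxAr hpsi subrr. Qed.

Lemma phPit0 w : phase_refl w Pit *m f0 = w *: f0 + 0 *: f1.
Proof. by rewrite phaseE vPitf0 subrr scaler0 scale0r !addr0. Qed.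
Lemma phPit1 w : phase_refl w Pit *m f1 = 0 *: f0 + w^* *: f1.
Proof. by rewrite phaseE vPitf1 subr0 scaler0 scale0r !add0r. Qed.
Lemma phPi0 w : phase_refl w Pi *m psi = w *: psi + 0 *: D.
Proof. by rewrite phaseE hpsi subrr scaler0 scale0r !addr0. Qed.
Lemma phPi1 w : phase_refl w Pi *m D = 0 *: psi + w^* *: D.
Proof. by rewrite phaseE vPiD subr0 scaler0 scale0r !add0r. Qed.

Lemma main_vec k v :
  UPhi k v U Pi Pit *m psi =
  if odd k then (ag k v).1.[t] *: f0 + (ag k v).2.[t] *: f1
  else (ag k v).1.[t] *: psi + (ag k v).2.[t] *: D.
Proof.
elim: k v => [|k IH] v.
  rewrite /UPhi /= big_geq // mul1mx hornerC horner0 scale1r scale0r addr0 //.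
rewrite UPhiS -mulmxA IH agS oddS.
case: (odd k); rewrite ?ifTE ?ifFE /negb ?ifTE ?ifFE ?fstE ?sndE.
- rewrite -mulmxA mul_cmb vU'f0 vU'f1 cmbE mul_cmb phPi0 phPi1 cmbE.
  rewrite !(hornerZ,hornerD,hornerN,hornerM,hornerX,hornerC).
  by congr (_ *: _ + _ *: _); ring.
- rewrite -mulmxA mul_cmb vUpsi vUD cmbE mul_cmb phPit0 phPit1 cmbE.
  rewrite !(hornerZ,hornerD,hornerN,hornerM,hornerX,hornerC).
  by congr (_ *: _ + _ *: _); ring.
Qed.
End Vec.

Lemma poly_eq_itv (p q : {poly C}) :
  (forall x : C, x \is Num.real -> -1 <= x <= 1 -> p.[x] = q.[x]) -> p = q.
Proof.
move=> h; apply/eqP; rewrite -subr_eq0; apply/negPn/negP => hne.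
set r := p - q in hne.
pose rs := [seq ((i.+1)%:R : C)^-1 | i <- iota 0 (size r)].
suff hlt : (size rs < size r)%N by rewrite size_map size_iota ltnn in hlt.
apply: max_poly_roots hne _ _.
- apply/allP => z /mapP [i _ ->]; rewrite /root /r hornerD hornerN h ?subrr //.
    by rewrite rpredV realn.
  have hp : (0 : C) < (i.+1)%:R by rewrite ltr0n.
  apply/andP; split.
  - apply: (@le_trans _ _ 0); first by rewrite lerN10.
    by rewrite invr_ge0 ler0n.
  - by rewrite invf_le1 // ler1n.
- rewrite map_inj_uniq ?iota_uniq // => i j /invr_inj /eqP.
  by rewrite eqr_nat => /eqP [].
Qed.

Lemma adjM m n p (A : 'M[C]_(m, n)) (B : 'M[C]_(n, p)) : (A *m B)^t* = B^t* *m A^t*.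
Proof. by rewrite trmx_mul map_mxM. Qed.
Lemma adjD m n (A B : 'M[C]_(m, n)) : (A + B)^t* = A^t* + B^t*.
Proof. by apply/matrixP => i j; rewrite !mxE rmorphD. Qed.
Lemma adjZ m n a (A : 'M[C]_(m, n)) : (a *: A)^t* = a^* *: A^t*.
Proof. by apply/matrixP => i j; rewrite !mxE rmorphM. Qed.
Lemma adj_sum m n d (F : 'I_d -> 'M[C]_(m, n)) : (\sum_i F i)^t* = \sum_i (F i)^t*.
Proof. by apply/matrixP => i j; rewrite !mxE !summxE rmorph_sum; apply: eq_bigr => k _; rewrite !mxE. Qed.

Lemma onb_sum (Q : 'M[C]_N) d (psi : 'I_d -> 'cV[C]_N) :
  orth_proj Q -> onb_of Q psi ->
  Q = \sum_i psi i *m (psi i)^t* /\ (forall i, Q *m psi i = psi i).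
Proof.
move=> [hQQ hQa] [horth /andP [h1 h2]].
set Pr := \matrix_(i < d) (psi i)^T in h1 h2.
have [Y hY] := submxP h1.
have [Z hZ] := submxP h2.
have hpsi i : Q *m psi i = psi i.
  have : row i Pr = (psi i)^T by rewrite rowK.
  rewrite hY row_mul => e.
  have -> : psi i = Q *m (row i Y)^T by rewrite -[psi i]trmxK -e trmx_mul trmxK.
  by rewrite mulmxA hQQ.
split=> //.
set Ps := Pr^T.
have hS : \sum_i psi i *m (psi i)^t* = Ps *m Ps^t*.
  apply/matrixP => a b; rewrite summxE mxE; apply: eq_bigr => i _.
  by rewrite !mxE big_ord1 !mxE.
have hPP : Ps^t* *m Ps = 1%:M.
  apply/matrixP => i j.
  have := congr1 (fun M : 'M[C]_1 => M ord0 ord0) (horth i j).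
  rewrite /= !mxE mulr1n => <-.
  by apply: eq_bigr => a _; rewrite !mxE.
have hQPs : Q *m Ps = Ps.
  by rewrite /Ps hY trmx_mul trmxK mulmxA hQQ.
have hQ : Q = Ps *m Z^T by rewrite -[Q]trmxK hZ trmx_mul.
have hSQ : Ps *m Ps^t* *m Q = Q.
  by rewrite {1}hQ !mulmxA -(mulmxA Ps) hPP mulmx1 -hQ.
have hQS : Q *m (Ps *m Ps^t*) = Ps *m Ps^t* by rewrite mulmxA hQPs.
have hSa : (Ps *m Ps^t*)^t* = Ps *m Ps^t* by rewrite adjM trmxCK.
rewrite hS -{1}hSQ -{1}hQa -hSa -adjM hQS hSa //.
Qed.
End S.
Arguments onb_sum {C N Q d psi}.
Arguments main_vec {C N U Pi Pit}.
Arguments qsp_col {C}.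
Arguments poly_eq_itv {C p q}.
Arguments adjM {C m n p}.
Arguments adjZ {C m n}.
Arguments adj_sum {C m n d}.

Theorem mainTheorem8 (C : numClosedFieldType) (N : nat)
    (U Pi Pit : 'M[C]_N)
    (hU : U \is unitarymx) (hPi : orth_proj Pi) (hPit : orth_proj Pit)
    (n : nat) (hn : (1 <= n)%N)
    (w : nat -> C) (hw : forall j : nat, (1 <= j <= n)%N -> `|w j| = 1)
    (P : {poly C}) (hPdeg : (size P <= n.+1)%N)
    (hP : forall x : C, x \is Num.real -> -1 <= x <= 1 ->
            qsp_mx n w x ord0 ord0 = P.[x])
    (psi : 'I_(\rank Pi) -> 'cV[C]_N) (psit : 'I_(\rank Pit) -> 'cV[C]_N)
    (s : 'I_(\rank Pi) -> C)
    (hsvd : is_svd (Pit *m U *m Pi) Pi Pit psi psit s) :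
  if odd n then
    svt_odd Pi Pit (fun x => P.[x]) psi psit s = Pit *m UPhi n w U Pi Pit *m Pi
  else
    svt_even Pi (fun x => P.[x]) psi s = Pi *m UPhi n w U Pi Pit *m Pi.
Proof.
have hUU : U *m U^t* = 1%:M by apply/unitarymxP.
have hUU' : U^t* *m U = 1%:M by apply: mulmx1C.
move: (hPi) (hPit) => [hPP hPa] [hTT hTa].
case: hsvd => [onbP [onbT [hs0 [hsz hA]]]].
have [hPsum hPpsi] := onb_sum hPi onbP.
have [_ hTpsi] := onb_sum hPit onbT.
have orthP := onbP.1.
have orthT := onbT.1.
set A := Pit *m U *m Pi in hA.
pose m := minn (\rank Pi) (\rank Pit).
pose wl := widen_ord (geq_minl (\rank Pi) (\rank Pit)).
pose wr := widen_ord (geq_minr (\rank Pi) (\rank Pit)).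
have hApsi j : A *m psi j = \sum_(i < m) s (wl i) *: (psit (wr i) *m ((wl i == j)%:R%:M)).
  by rewrite hA mulmx_suml; apply: eq_bigr => i _; rewrite -scalemxAl -mulmxA orthP.
have hA1 (i : 'I_m) : A *m psi (wl i) = s (wl i) *: psit (wr i).
  rewrite hApsi (bigD1 i) //= eqxx mul_mx_scalar scale1r big1 ?addr0 // => k hk.
  rewrite (_ : (wl k == wl i) = false) ?mul_mx_scalar ?scale0r ?scaler0 //.
  by apply/negbTE; rewrite -val_eqE /= val_eqE.
have hA0 (j : 'I_(\rank Pi)) : ~~ (j < m)%N -> A *m psi j = 0.
  move=> hj; rewrite hApsi big1 // => k _.
  rewrite (_ : (wl k == j) = false) ?mul_mx_scalar ?scale0r ?scaler0 //.
  apply/negbTE/eqP => e; move: hj; rewrite -e /=.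
  by rewrite ltn_ord.
have hAa : A^t* = Pi *m U^t* *m Pit by rewrite /A !adjM hPa hTa mulmxA.
have hAt : A^t* = \sum_(i < m) s (wl i) *: (psi (wl i) *m (psit (wr i))^t*).
  rewrite hA adj_sum; apply: eq_bigr => i _.
  by rewrite adjZ adjM trmxCK geC0_conj.
have hAt1 (i : 'I_m) : A^t* *m psit (wr i) = s (wl i) *: psi (wl i).
  rewrite hAt mulmx_suml (bigD1 i) //= -scalemxAl -mulmxA orthT eqxx mul_mx_scalar scale1r.
  rewrite big1 ?addr0 // => k hk.
  rewrite -scalemxAl -mulmxA orthT.
  rewrite (_ : (wr k == wr i) = false) ?mul_mx_scalar ?scale0r ?scaler0 //.
  by apply/negbTE; rewrite -val_eqE /= val_eqE.
have e1 (j : 'I_(\rank Pi)) : Pit *m (U *m psi j) = A *m psi j.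
  by rewrite /A -mulmxA hPpsi mulmxA.
have ht (j : 'I_(\rank Pi)) : Pi *m (U^t* *m (Pit *m (U *m psi j))) = (s j ^+ 2) *: psi j.
  case: (ltnP j m) => hj.
  - have ej : j = wl (Ordinal hj) by apply: val_inj.
    rewrite e1 ej hA1 -!scalemxAr -(hTpsi (wr _)) !mulmxA -hAa hAt1 scalerA expr2 //.
  - rewrite e1 hA0 ?mulmx0 -?leqNgt // hsz // expr0n /= scale0r //.
have mv j := main_vec hUU hUU' hTT _ _ (hPpsi j) (ht j) n w.
set a := (ag C n w).1 in mv.
have hPeq : P = (if odd n then 'X * (a \Po 'X ^+ 2) else a \Po 'X ^+ 2).
  apply: poly_eq_itv => x hx hx1; rewrite -hP //.
  have [h0 _] := qsp_col n w x; rewrite h0 -/a.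
  case: (odd n); rewrite ?ifTE ?ifFE.
  - by rewrite hornerM hornerX horner_comp hornerXn.
  - by rewrite horner_comp hornerXn mul1r.
case hodd: (odd n); rewrite ?ifTE ?ifFE.
- have hj (j : 'I_(\rank Pi)) : Pit *m (UPhi n w U Pi Pit *m psi j) = a.[s j ^+ 2] *: (A *m psi j).
    rewrite (mv j) hodd /= mulmxDr -!scalemxAr mulmxBr !mulmxA hTT subrr scaler0 addr0.
    by rewrite -mulmxA e1.
  rewrite [X in _ = _ *m X]hPsum mulmx_sumr.
  rewrite (eq_bigr (fun j => (Pit *m (UPhi n w U Pi Pit *m psi j)) *m (psi j)^t*)); last first.
    by move=> j _; rewrite !mulmxA.
  rewrite (bigID (fun j : 'I_(\rank Pi) => (j < m)%N)) /=.
  rewrite [X in _ = _ + X]big1 ?addr0; last first.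
    by move=> j /= hjm; rewrite hj hA0 // scaler0 mul0mx.
  rewrite (big_ord_narrow (geq_minl (\rank Pi) (\rank Pit))) /svt_odd; apply: eq_bigr => i _.
  rewrite hj hA1 hPeq hodd /= hornerM hornerX horner_comp hornerXn.
  by rewrite -!scalemxAl scalerA mulrC.
- have hj (j : 'I_(\rank Pi)) : Pi *m (UPhi n w U Pi Pit *m psi j) = a.[s j ^+ 2] *: psi j.
    rewrite (mv j) hodd /= mulmxDr -!scalemxAr mulmxBr ht hPpsi -scalemxAr hPpsi subrr.
    by rewrite scaler0 addr0.
  rewrite [X in _ = _ *m X]hPsum mulmx_sumr /svt_even; apply: eq_bigr => j _.
  rewrite !mulmxA -(mulmxA Pi) hj hPeq hodd /= horner_comp hornerXn.
  by rewrite -scalemxAl.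
Qed.
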